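(* Let $\mathcal{A} = \{\boldsymbol{a}_k\} \subset \mathbb{C}^n$ be an atomic set such that any $r \le n$ distinct atoms of $\mathcal{A}$ are linearly independent, and let $\boldsymbol{x} \in \mathbb{C}^n$. For a parameter $\boldsymbol{\theta} = \{\boldsymbol{a}_j, d_j : j = 1,\dots,r\}$ with $r$ a positive integer, $\boldsymbol{a}_j \in \mathcal{A}$ and $d_j > 0$, and for $\beta > 0$, define $$\mathcal{L}(\boldsymbol{\theta}, \beta) = \frac{1}{2}\sum_{j=1}^{r} d_j + \frac{1}{2}\, \boldsymbol{x}^H \Big(\sum_{j=1}^{r} d_j\, \boldsymbol{a}_j \boldsymbol{a}_j^H + \beta \boldsymbol{I}\Big)^{-1} \boldsymbol{x}.$$ Then $$\|\boldsymbol{x}\|_{\mathcal{A}} = \inf_{\boldsymbol{\theta}} \lim_{\beta \to 0^+} \mathcal{L}(\boldsymbol{\theta}, \beta) = \lim_{\beta \to 0^+} \inf_{\boldsymbol{\theta}} \mathcal{L}(\boldsymbol{\theta}, \beta),$$ where the infima range over all such $\boldsymbol{\theta}$ (including all $r$), and limits may take the value $+\infty$.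
   Context: For an atomic set $\mathcal{A} \subset \mathbb{C}^n$, the atomic norm of $\boldsymbol{x} \in \mathbb{C}^n$ is $\|\boldsymbol{x}\|_{\mathcal{A}} = \inf\{ \sum_{k=1}^{r} |s_k| : r \in \mathbb{N},\ s_k \in \mathbb{C},\ \boldsymbol{a}_k \in \mathcal{A},\ \boldsymbol{x} = \sum_{k=1}^{r} s_k \boldsymbol{a}_k \}$. $\boldsymbol{I}$ is the $n\times n$ identity and $^H$ denotes conjugate transpose. *)

(* Defs.v *)
From HB Require Import structures.
From mathcomp Require Import all_boot all_order all_algebra.
From mathcomp Require Import all_classical all_reals all_analysis.
From mathcomp Require Import complex.
Set Implicit Arguments. Unset Strict Implicit. Unset Printing Implicit Defensive.
Import Order.TTheory GRing.Theory Num.Theory.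
Local Open Scope ring_scope.
Local Open Scope classical_set_scope.

Definition adjmx (R : realType) (m p : nat) (M : 'M[R[i]]_(m, p)) : 'M[R[i]]_(p, m) :=
  (map_mx Num.conj M)^T.

Definition atoms_lin_indep (R : realType) (n : nat) (A : set 'cV[R[i]]_n) : Prop :=
  forall (r : nat) (a : 'I_r -> 'cV[R[i]]_n),
    (r <= n)%N -> injective a -> (forall j, A (a j)) ->
    forall c : 'I_r -> R[i], \sum_(j < r) c j *: a j = 0 -> forall j, c j = 0.

(** Atomic norm (extended-real valued; +oo when x has no representation). *)
Definition atomic_norm (R : realType) (n : nat) (A : set 'cV[R[i]]_n)
    (x : 'cV[R[i]]_n) : \bar R :=
  ereal_inf [set y : \bar R | exists (r : nat) (s : 'I_r -> R[i])
      (a : 'I_r -> 'cV[R[i]]_n),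
      [/\ (0 < r)%N, (forall k, A (a k)), x = \sum_(k < r) s k *: a k
        & y = (\sum_(k < r) complex.Re `|s k|)%:E]].

Definition valid_theta (R : realType) (n : nat) (A : set 'cV[R[i]]_n)
    (r : nat) (a : 'I_r -> 'cV[R[i]]_n) (d : 'I_r -> R) : Prop :=
  [/\ (0 < r)%N, (forall j, A (a j)) & (forall j, 0 < d j)].

(** L(theta, beta) = 1/2 sum d_j + 1/2 x^H (sum d_j a_j a_j^H + beta I)^-1 x.
    The quadratic form is real for beta > 0 (Hermitian positive definite
    matrix); we take its real part to view it in R. *)
Definition Lcost (R : realType) (n : nat) (x : 'cV[R[i]]_n)
    (r : nat) (a : 'I_r -> 'cV[R[i]]_n) (d : 'I_r -> R) (beta : R) : R :=
  2^-1 * (\sum_(j < r) d j)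
  + 2^-1 * complex.Re
      ((adjmx x *m invmx (\sum_(j < r) ((d j)%:C%C *: (a j *m adjmx (a j)))
                          + (beta%:C%C)%:M) *m x) 0 0).

(* Main.v *)
Require Import Defs.
From HB Require Import structures.
From mathcomp Require Import all_boot all_order all_algebra.
From mathcomp Require Import all_classical all_reals all_analysis.
From mathcomp Require Import complex.
From mathcomp Require Import ring lra.
Import Order.TTheory GRing.Theory Num.Theory.
Local Open Scope ring_scope.
Local Open Scope classical_set_scope.
Set Implicit Arguments. Unset Strict Implicit. Unset Printing Implicit Defensive.
Section Alg.
Variables (R : realType) (n : nat).
Local Notation C := R[i].
Local Notation vec := 'cV[C]_n.

Definition dot (u v : vec) : C := \sum_i (u i 0)^* * v i 0.

Lemma dotE (u v : vec) : (adjmx u *m v) 0 0 = dot u v.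
Proof. by rewrite !mxE; apply: eq_bigr => i _; rewrite !mxE. Qed.

Lemma dotDr u v w : dot u (v + w) = dot u v + dot u w.
Proof. by rewrite /dot -big_split; apply: eq_bigr => i _; rewrite mxE mulrDr. Qed.
Lemma dotZr u c v : dot u (c *: v) = c * dot u v.
Proof. by rewrite /dot mulr_sumr; apply: eq_bigr => i _; rewrite mxE mulrCA. Qed.
Lemma dotNr u v : dot u (- v) = - dot u v.
Proof. by rewrite -scaleN1r dotZr mulN1r. Qed.
Lemma dotBr u v w : dot u (v - w) = dot u v - dot u w.
Proof. by rewrite dotDr dotNr. Qed.
Lemma dot_sumr u m (f : 'I_m -> vec) : dot u (\sum_j f j) = \sum_j dot u (f j).
Proof.
rewrite /dot exchange_big; apply: eq_bigr => i _.
by rewrite summxE mulr_sumr.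
Qed.
Lemma dotC u v : dot v u = (dot u v)^*.
Proof. by rewrite /dot rmorph_sum; apply: eq_bigr => i _; rewrite rmorphM /= conjCK mulrC. Qed.
Lemma dotDl u v w : dot (u + v) w = dot u w + dot v w.
Proof. by rewrite dotC dotDr rmorphD /= -!dotC. Qed.
Lemma dotZl c u v : dot (c *: u) v = c^* * dot u v.
Proof. by rewrite dotC dotZr rmorphM /= -dotC. Qed.
Lemma dotNl u v : dot (- u) v = - dot u v.
Proof. by rewrite dotC dotNr rmorphN /= -dotC. Qed.
Lemma dotBl u v w : dot (u - v) w = dot u w - dot v w.
Proof. by rewrite dotDl dotNl. Qed.
Lemma dot_suml m (f : 'I_m -> vec) v : dot (\sum_j f j) v = \sum_j dot (f j) v.
Proof. by rewrite dotC dot_sumr rmorph_sum; apply: eq_bigr => j _; rewrite [RHS]dotC. Qed.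

Definition Mx m (a : 'I_m -> vec) (d : 'I_m -> R) (beta : R) : 'M[C]_n :=
  \sum_(j < m) ((d j)%:C%C *: (a j *m adjmx (a j))) + (beta%:C%C)%:M.

Lemma MxE m a d beta v : Mx a d beta *m v =
  \sum_(j < m) ((d j)%:C%C * dot (a j) v) *: a j + beta%:C%C *: v.
Proof.
rewrite /Mx mulmxDl mulmx_suml mul_scalar_mx; congr (_ + _).
apply: eq_bigr => j _; rewrite -scalemxAl -mulmxA [adjmx _ *m _]mx11_scalar.
by rewrite dotE mul_mx_scalar scalerA.
Qed.

Definition md (z : C) : R := complex.Re `|z|.
Lemma mdE z : md z = Num.sqrt (complex.Re z ^+ 2 + complex.Im z ^+ 2).
Proof. by rewrite /md normc_def. Qed.
Lemma md_ge0 z : 0 <= md z. Proof. by rewrite mdE sqrtr_ge0. Qed.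
Lemma md2 z : md z ^+ 2 = complex.Re z ^+ 2 + complex.Im z ^+ 2.
Proof. by rewrite mdE sqr_sqrtr // addr_ge0 // sqr_ge0. Qed.
Lemma ReJM (z : C) : complex.Re (z^* * z) = md z ^+ 2.
Proof. by rewrite md2; case: z => a b /=; rewrite mulNr opprK !expr2. Qed.
Lemma ReMJ (z : C) : complex.Re (z * z^*) = md z ^+ 2.
Proof. by rewrite mulrC ReJM. Qed.
Lemma conjR (r : R) : (r%:C%C)^* = r%:C%C :> C.
Proof. exact: conjc_real. Qed.
Lemma Re_sum m (f : 'I_m -> C) : complex.Re (\sum_j f j) = \sum_j complex.Re (f j).
Proof. by rewrite raddf_sum. Qed.
Lemma ReD (z w : C) : complex.Re (z + w) = complex.Re z + complex.Re w.
Proof. by case: z; case: w. Qed.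
Lemma ReN (z : C) : complex.Re (- z) = - complex.Re z.
Proof. by case: z. Qed.
Lemma ReRM (r : R) (z : C) : complex.Re (r%:C%C * z) = r * complex.Re z.
Proof. by case: z => a b /=; rewrite mul0r subr0. Qed.
Lemma ReJ (z : C) : complex.Re (z^*) = complex.Re z.
Proof. by case: z. Qed.
Lemma ImJ (z : C) : complex.Im (z^*) = - complex.Im z.
Proof. by case: z. Qed.
Lemma Re_le_md z : complex.Re z <= md z.
Proof.
rewrite mdE; apply: le_trans (real_ler_norm (num_real _)) _.
rewrite -sqrtr_sqr ler_sqrt ?addr_ge0 ?sqr_ge0 //.
by rewrite lerDl sqr_ge0.
Qed.
Lemma normE z : `|z| = (md z)%:C%C.
Proof. by rewrite normc_def mdE. Qed.
Lemma mdM z w : md (z * w) = md z * md w.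
Proof. by rewrite /md normrM !normE -rmorphM. Qed.
Lemma mdJ z : md z^* = md z.
Proof. by rewrite !mdE ReJ ImJ sqrrN. Qed.
Lemma md_real (r : R) : md r%:C%C = `|r|.
Proof. by rewrite mdE /= expr0n /= addr0 sqrtr_sqr. Qed.
Lemma md_eq0 z : md z = 0 -> z = 0.
Proof. by move=> h; apply/eqP; rewrite -normr_eq0 normE h. Qed.

Definition Nv (v : vec) : R := complex.Re (dot v v).
Lemma NvE v : Nv v = \sum_i md (v i 0) ^+ 2.
Proof. by rewrite /Nv /dot Re_sum; apply: eq_bigr => i _; rewrite ReJM. Qed.
Lemma Nv_ge0 v : 0 <= Nv v.
Proof. by rewrite NvE sumr_ge0 // => i _; rewrite sqr_ge0. Qed.
Lemma Nv_eq0 v : Nv v = 0 -> v = 0.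
Proof.
rewrite NvE => /psumr_eq0P h; apply/matrixP => i j; rewrite ord1 mxE.
have /eqP := h (fun i _ => sqr_ge0 _) i isT. by rewrite sqrf_eq0 => /eqP /md_eq0.
Qed.
Lemma NvZ (r : R) v : Nv (r%:C%C *: v) = r ^+ 2 * Nv v.
Proof. by rewrite /Nv dotZl dotZr conjR mulrA -rmorphM ReRM expr2. Qed.

Section M.
Variables (m : nat) (a : 'I_m -> vec) (d : 'I_m -> R).

Lemma qf b y : dot y (Mx a d b *m y) =
  \sum_j (d j)%:C%C * ((dot (a j) y)^* * dot (a j) y) + b%:C%C * dot y y.
Proof.
rewrite MxE dotDr dot_sumr dotZr; congr (_ + _); apply: eq_bigr => j _.
by rewrite dotZr [dot y _]dotC -mulrA [_ * _^*]mulrC.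
Qed.

Lemma Re_qf b y : complex.Re (dot y (Mx a d b *m y)) =
  \sum_j d j * md (dot (a j) y) ^+ 2 + b * Nv y.
Proof.
rewrite qf ReD Re_sum ReRM; congr (_ + _); apply: eq_bigr => j _.
by rewrite ReRM ReJM.
Qed.

Lemma herm b u v : dot u (Mx a d b *m v) = dot (Mx a d b *m u) v.
Proof.
rewrite !MxE dotDr dotDl dot_sumr dot_suml dotZr dotZl conjR; congr (_ + _).
apply: eq_bigr => j _; rewrite dotZr dotZl rmorphM /= conjR -mulrA mulrC.
by rewrite [dot u _]dotC mulrAC [RHS]mulrC mulrA.
Qed.

Hypothesis d_ge0 : forall j, 0 <= d j.

Lemma Re_qf_ge b y : 0 <= b -> b * Nv y <= complex.Re (dot y (Mx a d b *m y)).
Proof.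
move=> b0; rewrite Re_qf lerDr sumr_ge0 // => j _.
by rewrite mulr_ge0 // sqr_ge0.
Qed.

Lemma Mx_unit b : 0 < b -> Mx a d b \in unitmx.
Proof.
move=> b0; rewrite unitmxE unitfE -det_tr; apply/negP => /det0P [v v0 hv].
have hv' : Mx a d b *m v^T = 0 by rewrite -[Mx a d b]trmxK -trmx_mul hv trmx0.
have z : dot v^T 0 = 0 by rewrite /dot big1 // => i _; rewrite !mxE mulr0.
have := Re_qf_ge (v^T) (ltW b0); rewrite hv' z /=.
move=> h; have : Nv v^T = 0.
  apply/eqP; rewrite eq_le Nv_ge0 andbT -(pmulr_rle0 _ b0); exact: h.
by move/Nv_eq0/(congr1 trmx); rewrite trmxK trmx0 => /eqP; rewrite (negPf v0).
Qed.
End M.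
End Alg.

Section Cost.
Variables (R : realType) (n : nat) (x : 'cV[R[i]]_n).
Variables (m : nat) (a : 'I_m -> 'cV[R[i]]_n) (d : 'I_m -> R).
Hypothesis d_gt0 : forall j, 0 < d j.
Let d_ge0 j : 0 <= d j. Proof. exact: ltW. Qed.

Definition yb b := invmx (Mx a d b) *m x.
Definition Qb b := complex.Re (dot x (yb b)).

Lemma Myb b : 0 < b -> Mx a d b *m yb b = x.
Proof. by move=> b0; rewrite /yb mulKVmx // (Mx_unit a d_ge0 b0). Qed.

Lemma LcostE b : Lcost x a d b = 2^-1 * (\sum_j d j) + 2^-1 * Qb b.
Proof. by rewrite /Lcost -mulmxA dotE. Qed.

Lemma QbE b : 0 < b -> Qb b = \sum_j d j * md (dot (a j) (yb b)) ^+ 2 + b * Nv (yb b).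
Proof.
move=> b0; rewrite /Qb -Re_qf; congr complex.Re.
by rewrite -[in LHS](Myb b0) herm.
Qed.

Lemma Qb_var b z : 0 < b ->
  2 * complex.Re (dot z x) - complex.Re (dot z (Mx a d b *m z)) <= Qb b.
Proof.
move=> b0; have := Re_qf_ge a d_ge0 (z - yb b) (ltW b0).
rewrite mulmxBr Myb // dotBl !dotBr.
rewrite [dot (yb b) (Mx a d b *m z)]herm Myb //.
rewrite [dot x z]dotC [dot (yb b) x]dotC ?(ReD, ReN, ReJ) -/(Qb b).
have := mulr_ge0 (ltW b0) (Nv_ge0 (z - yb b)). lra.
Qed.

Lemma Qb_mono b1 b2 : 0 < b1 -> b1 <= b2 -> Qb b2 <= Qb b1.
Proof.
move=> b10 b12; have b20 : 0 < b2 by apply: lt_le_trans b12.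
have := Qb_var (yb b2) b10; rewrite Re_qf.
rewrite [dot _ x]dotC ReJ -/(Qb b2).
have := QbE b20; have := Nv_ge0 (yb b2).
set S := \sum_j _; set N := Nv _.
have : b1 * N <= b2 * N by rewrite ler_wpM2r // Nv_ge0.
lra.
Qed.

Lemma Lcost_mono b1 b2 : 0 < b1 -> b1 <= b2 -> Lcost x a d b2 <= Lcost x a d b1.
Proof.
move=> b10 b12; rewrite !LcostE lerD2l ler_wpM2l ?invr_ge0 ?ler0n //.
exact: Qb_mono.
Qed.

Definition sb b j := (d j)%:C%C * dot (a j) (yb b).
Lemma Lcost_lb b : 0 < b ->
  \sum_j md (sb b j) + Nv (x - \sum_j sb b j *: a j) / (2 * b) <= Lcost x a d b.
Proof.
move=> b0; set s := sb b.
have hx : x - \sum_j s j *: a j = b%:C%C *: yb b.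
  by rewrite -{1}(Myb b0) MxE addrAC subrr add0r.
rewrite hx NvZ LcostE QbE //.
have -> : b ^+ 2 * Nv (yb b) / (2 * b) = 2^-1 * (b * Nv (yb b)).
  field; by rewrite gt_eqF.
rewrite mulrDr addrA lerD2r -mulrDr -big_split /= mulr_sumr.
apply: ler_sum => j _; rewrite /s mdM md_real ger0_norm //.
set w := md _.
have := d_gt0 j; have := md_ge0 (dot (a j) (yb b)); rewrite -/w => w0 dj.
have : 0 <= d j * (w - 1) ^+ 2 by rewrite mulr_ge0 // sqr_ge0.
rewrite !expr2; nra.
Qed.

Lemma Lcost_ub b (s : 'I_m -> R[i]) : 0 < b -> x = \sum_j s j *: a j ->
  Lcost x a d b <= 2^-1 * (\sum_j d j) + 2^-1 * \sum_j md (s j) ^+ 2 / d j.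
Proof.
move=> b0 hx; rewrite LcostE lerD2l ler_wpM2l ?invr_ge0 ?ler0n //.
have h1 : Qb b = \sum_j complex.Re ((s j)^* * dot (a j) (yb b)).
  by rewrite /Qb {1}hx dot_suml Re_sum; apply: eq_bigr => j _; rewrite dotZl.
have h2 := QbE b0.
have h3 : 0 <= b * Nv (yb b) by rewrite mulr_ge0 ?Nv_ge0 // ltW.
have -> : Qb b = 2 * Qb b - Qb b by ring.
rewrite {1}h1 {}h2 mulr_sumr opprD addrA -sumrB.
rewrite -[X in _ <= X]addr0; apply: lerD; last by rewrite oppr_le0.
apply: ler_sum => j _.
have := Re_le_md ((s j)^* * dot (a j) (yb b)); rewrite mdM mdJ.
set S := md (s j); set W := md _; set Z := complex.Re _ => hZ.
have dj := d_gt0 j.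
have e : S ^+ 2 / d j - 2 * S * W + d j * W ^+ 2 = (S - d j * W) ^+ 2 / d j.
  field; by rewrite gt_eqF.
have : 0 <= (S - d j * W) ^+ 2 / d j by rewrite divr_ge0 ?sqr_ge0 // ltW.
rewrite -e; nra.
Qed.
End Cost.

Section Basis.
Variables (R : realType) (n : nat) (A : set 'cV[R[i]]_n).
Local Notation C := R[i].
Local Notation vec := 'cV[C]_n.

Lemma trZ p q (c : C) (M : 'M[C]_(p, q)) : (c *: M)^T = c *: M^T.
Proof. by apply/matrixP => i j; rewrite !mxE. Qed.

Lemma trSum p q k (f : 'I_k -> 'M[C]_(p, q)) : (\sum_i f i)^T = \sum_i (f i)^T.
Proof. by apply/matrixP => i j; rewrite !mxE !summxE; apply: eq_bigr => l _; rewrite mxE. Qed.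

Definition Smx m (b : 'I_m -> vec) : 'M[C]_(m, n) := \matrix_(i, j) b i j 0.

Lemma row_Smx m (b : 'I_m -> vec) i : (row i (Smx b))^T = b i.
Proof. by apply/matrixP => j k; rewrite !mxE (ord1 k). Qed.

Lemma expand_Smx m (b : 'I_m -> vec) (c : 'rV[C]_m) :
  (c *m Smx b)^T = \sum_i c 0 i *: b i.
Proof.
rewrite mulmx_sum_row trSum; apply: eq_bigr => i _.
by rewrite trZ row_Smx.
Qed.

Definition complete m (b : 'I_m -> vec) :=
  [/\ (0 < m)%N, (forall i, A (b i)) & forall v, A v -> (v^T <= Smx b)%MS].

Lemma basis_exists : (exists v, A v) -> exists m (b : 'I_m -> vec), complete b.
Proof.
move=> [v0 Av0]; apply: contrapT => hno.
suff : forall k, exists m (b : 'I_m -> vec),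
    [/\ (0 < m)%N, (forall i, A (b i)) & (k <= \rank (Smx b))%N].
  move=> /(_ n.+1) [m [b [_ _]]]; by rewrite ltnNge rank_leq_col.
elim => [|k [m [b [m0 Ab rk]]]].
  by exists 1%N, (fun _ => v0).
have [v Av nv] : exists2 v, A v & ~~ (v^T <= Smx b)%MS.
  apply: contrapT => h; apply: hno; exists m, b; split => // w Aw.
  by apply: contrapT => /negP hw; apply: h; exists w.
pose X := col_mx (Smx b) v^T.
exists (m + 1)%N, (fun i => (row i X)^T); split.
- by rewrite addn1.
- move=> i; rewrite -(fintype.splitK i); case: (fintype.split i) => j /=.
    by rewrite rowKu row_Smx.
  rewrite rowKd (ord1 j).
  suff -> : (row 0 v^T)^T = v by [].
  by apply/matrixP => p q; rewrite !mxE (ord1 q).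
- have -> : Smx (fun i => (row i X)^T) = X by apply/matrixP => p q; rewrite !mxE.
  apply: leq_ltn_trans rk _.
  have h : (Smx b <= X)%MS by rewrite -addsmxE addsmxSl.
  by rewrite (ltn_leqif (mxrank_leqif_sup h)) /X col_mx_sub submx_refl.
Qed.

Lemma rep_sub m (b : 'I_m -> vec) r (s : 'I_r -> C) (a : 'I_r -> vec) :
  complete b -> (forall j, A (a j)) -> ((\sum_j s j *: a j)^T <= Smx b)%MS.
Proof.
move=> [_ _ cb] Aa; rewrite trSum; apply: summx_sub => j _.
by rewrite trZ; apply: scalemx_sub; apply: cb.
Qed.

Lemma sub_expand m (b : 'I_m -> vec) (w : vec) : (w^T <= Smx b)%MS ->
  w = \sum_i (w^T *m pinvmx (Smx b)) 0 i *: b i.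
Proof. by move=> h; rewrite -expand_Smx mulmxKpV // trmxK. Qed.
End Basis.

Section LSC.
Variables (R : realType) (n : nat) (A : set 'cV[R[i]]_n) (x : 'cV[R[i]]_n).
Local Notation C := R[i].
Local Notation vec := 'cV[C]_n.

Lemma md_sum k (f : 'I_k -> C) : md (\sum_j f j) <= \sum_j md (f j).
Proof.
have : `|\sum_j f j| <= \sum_j `|f j| := ler_norm_sum _ _ _.
rewrite normE.
rewrite [X in _ <= X](eq_bigr (fun j => (md (f j))%:C%C)); last by move=> j _; rewrite normE.
by rewrite -rmorph_sum lecR.
Qed.

Lemma md_le_Nv (e : vec) j : md (e j 0) ^+ 2 <= Nv e.
Proof.
rewrite NvE (bigD1 j) //= lerDl sumr_ge0 // => i _; exact: sqr_ge0.
Qed.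

Lemma lin_bound p (G : 'M[C]_(n, p)) (e : vec) (eta : R) :
  0 < eta -> Nv e < eta ^+ 2 ->
  forall k, md ((e^T *m G) 0 k) <= eta * \sum_j md (G j k).
Proof.
move=> eta0 hN k; rewrite mxE mulr_sumr; apply: le_trans (md_sum _) _.
apply: ler_sum => j _; rewrite mxE mdM ler_wpM2r ?md_ge0 //.
have h1 := md_le_Nv e j; have h2 := md_ge0 (e j 0).
rewrite leNgt; apply/negP => h3.
have : eta ^+ 2 < md (e j 0) ^+ 2 by rewrite !expr2; nra.
lra.
Qed.

Lemma an_ge0 : (0 <= atomic_norm A x)%E.
Proof.
apply: le_ereal_inf_tmp => y [r [s [a [_ _ _ ->]]]].
by rewrite lee_fin sumr_ge0 // => j _; exact: (md_ge0 (s j)).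
Qed.

Lemma concat_rep r (s : 'I_r -> C) (a : 'I_r -> vec) m (c : 'I_m -> C) (b : 'I_m -> vec) :
  (0 < r)%N -> (forall j, A (a j)) -> (forall i, A (b i)) ->
  (atomic_norm A (\sum_j s j *: a j + \sum_i c i *: b i) <=
    (\sum_j md (s j) + \sum_i md (c i))%:E)%E.
Proof.
move=> r0 Aa Ab; apply: ereal_inf_lbound.
pose s' (k : 'I_(r + m)) := match fintype.split k with inl j => s j | inr i => c i end.
pose a' (k : 'I_(r + m)) := match fintype.split k with inl j => a j | inr i => b i end.
have sl j : fintype.split (lshift m j) = inl j := unsplitK (inl _ j).
have sr i : fintype.split (rshift r i) = inr i := unsplitK (inr _ i).
exists (r + m)%N, s', a'; split.
- by rewrite ltn_addr.
- by move=> k; rewrite /a'; case: (fintype.split k).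
- by rewrite big_split_ord /s' /a' /=; congr (_ + _); apply: eq_bigr => j _; rewrite ?sl ?sr.
- by rewrite big_split_ord /s' /=; congr (EFin (_ + _)); apply: eq_bigr => j _;
    rewrite ?sl ?sr.
Qed.

Lemma trB p q (M1 M2 : 'M[C]_(p, q)) : (M1 - M2)^T = M1^T - M2^T.
Proof. by apply/matrixP => i j; rewrite !mxE. Qed.

Lemma lsc (M : R) : (M%:E < atomic_norm A x)%E ->
  exists2 del : R, 0 < del & forall r (s : 'I_r -> C) (a : 'I_r -> vec),
    (0 < r)%N -> (forall j, A (a j)) -> Nv (x - \sum_j s j *: a j) < del ->
    M <= \sum_j md (s j).
Proof.
move=> hM.
case: (pselect (exists v, A v)) => [hA|hA]; last first.
  by exists 1 => // r s a r0 Aa; exfalso; apply: hA; exists (a (Ordinal r0)).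
have [m [b cb]] := basis_exists hA; have [m0 Ab cS] := cb.
set S := Smx b.
case: (boolP (x^T <= S)%MS) => hx.
- set G := pinvmx S.
  have hxe := sub_expand hx.
  have Nfin : (atomic_norm A x <= (\sum_i md ((x^T *m G) 0 i))%:E)%E.
    apply: ereal_inf_lbound; exists m, (fun i => (x^T *m G) 0 i), b; split => //.
  have [N0 hN0e] : exists N0 : R, atomic_norm A x = N0%:E.
    by move: Nfin an_ge0; case: (atomic_norm A x) => // N0 _ _; exists N0.
  rewrite hN0e lte_fin in hM.
  set K := \sum_k \sum_j md (G j k).
  have K0 : 0 <= K by rewrite sumr_ge0 // => k _; rewrite sumr_ge0 // => j _; exact: md_ge0.
  set eta := (N0 - M) / (K + 1).
  have eta0 : 0 < eta by rewrite divr_gt0 // ?subr_gt0 // ltr_wpDl.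
  have etaK : eta * K < N0 - M.
    have -> : N0 - M = eta * (K + 1) by rewrite /eta mulfVK // gt_eqF // ltr_wpDl.
    by rewrite ltr_pM2l // ltrDl.
  exists (eta ^+ 2); first by rewrite exprn_gt0.
  move=> r s a r0 Aa hN.
  set w := \sum_j s j *: a j in hN *.
  have he : ((x - w)^T <= S)%MS.
    rewrite trB; apply: addmx_sub => //; rewrite eqmx_opp; exact: rep_sub cb Aa.
  have hxw : x = w + \sum_i ((x - w)^T *m G) 0 i *: b i by rewrite -(sub_expand he) addrC subrK.
  have := concat_rep s (fun i => ((x - w)^T *m G) 0 i) r0 Aa Ab.
  rewrite -/w -hxw => hN0.
  have hb : \sum_i md (((x - w)^T *m G) 0 i) <= eta * K.
    rewrite /K mulr_sumr; apply: ler_sum => k _; exact: lin_bound.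
  rewrite hN0e lee_fin in hN0.
  lra.
- have hP : x^T *m cokermx S != 0 by rewrite -submxE.
  have [i0 [k hk]] := matrix0Pn _ hP.
  rewrite (ord1 i0) in hk.
  set v := md ((x^T *m cokermx S) 0 k).
  have v0 : 0 < v.
    rewrite lt_def md_ge0 andbT; apply/eqP => /md_eq0 h; by rewrite h eqxx in hk.
  set K := \sum_j md (cokermx S j k).
  have K0 : 0 <= K by rewrite sumr_ge0 // => j _; exact: md_ge0.
  set eta := v / (K + 1).
  have eta0 : 0 < eta by rewrite divr_gt0 // ltr_wpDl.
  have etaK : eta * K < v.
    have -> : v = eta * (K + 1) by rewrite /eta mulfVK // gt_eqF // ltr_wpDl.
    by rewrite ltr_pM2l // ltrDl.
  exists (eta ^+ 2); first by rewrite exprn_gt0.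
  move=> r s a r0 Aa hN; exfalso.
  set w := \sum_j s j *: a j in hN.
  have hw : w^T *m cokermx S = 0 by apply/eqP; rewrite -submxE; exact: rep_sub cb Aa.
  have he : (x - w)^T *m cokermx S = x^T *m cokermx S by rewrite trB mulmxBl hw subr0.
  have := lin_bound (cokermx S) eta0 hN k; rewrite he -/v -/K.
  lra.
Qed.
End LSC.

Lemma le_from_below (R : realType) (N S : \bar R) :
  (forall M : R, (M%:E < N)%E -> (M%:E <= S)%E) -> (N <= S)%E.
Proof.
case: N => [r| |] h; last by rewrite leNye.
- apply/lee_subgt0Pr => e e0; rewrite -EFinB; apply: h.
  by rewrite lte_fin ltrBlDr ltrDl.
- case: S h => [s| |] h; last 2 first.
  + by rewrite leey.
  + by have := h 0%R (ltry _).
  by move: (h (s + 1)%R (ltry _)); rewrite lee_fin => hh; exfalso; lra.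
Qed.

Lemma ub_rep (R : realType) n (x : 'cV[R[i]]_n) r (s : 'I_r -> R[i]) a (e : R) :
  (0 < r)%N -> x = \sum_j s j *: a j -> 0 < e -> forall b, 0 < b ->
  Lcost x a (fun k => md (s k) + e) b <= \sum_j md (s j) + r%:R * e.
Proof.
move=> r0 hx e0 b b0.
have dp : forall k, 0 < md (s k) + e by move=> k; rewrite ltr_wpDl // md_ge0.
apply: le_trans (Lcost_ub dp b0 hx) _.
have h1 : \sum_j md (s j) ^+ 2 / (md (s j) + e) <= \sum_j md (s j).
  apply: ler_sum => j _; rewrite ler_pdivrMr // expr2 ler_wpM2l ?md_ge0 //.
  by rewrite lerDl ltW.
have h2 : \sum_j (md (s j) + e) = \sum_j md (s j) + r%:R * e.
  by rewrite big_split /= sumr_const card_ord mulr_natl.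
rewrite h2.
have : 0 <= r%:R * e by rewrite mulr_ge0 // ltW.
lra.
Qed.

Unset Implicit Arguments.
Theorem theorem3 (R : realType) (n : nat) (A : set 'cV[R[i]]_n)
    (x : 'cV[R[i]]_n) :
  atoms_lin_indep A ->
  (forall (r : nat) (a : 'I_r -> 'cV[R[i]]_n) (d : 'I_r -> R),
      valid_theta A a d ->
      exists l : \bar R, (fun beta => (Lcost x a d beta)%:E) @ 0^'+ --> l) /\
  atomic_norm A x =
    ereal_inf [set y : \bar R | exists (r : nat) (a : 'I_r -> 'cV[R[i]]_n)
        (d : 'I_r -> R), valid_theta A a d /\
        y = lim ((fun beta => (Lcost x a d beta)%:E) @ 0^'+)] /\
  (fun beta : R =>
     ereal_inf [set y : \bar R | exists (r : nat) (a : 'I_r -> 'cV[R[i]]_n)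
        (d : 'I_r -> R), valid_theta A a d /\ y = (Lcost x a d beta)%:E])
    @ 0^'+ --> atomic_norm A x.
Proof.
move=> _.
set N := atomic_norm A x.
have mono : forall r (a : 'I_r -> 'cV[R[i]]_n) d, valid_theta A a d ->
    {in `]0, +oo[%R &, nonincreasing_fun (fun b => (Lcost x a d b)%:E)}.
  move=> r a d [_ _ dp] b1 b2; rewrite !in_itv /= !andbT => b10 _ h.
  by rewrite lee_fin; exact: Lcost_mono.
have lim_sup : forall r (a : 'I_r -> 'cV[R[i]]_n) d, valid_theta A a d ->
    (fun b => (Lcost x a d b)%:E) @ 0^'+ -->
    ereal_sup ((fun b => (Lcost x a d b)%:E) @` `]0, +oo[).
  move=> r a d v; apply: nonincreasing_at_right_cvge; first by rewrite bnd_simp.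
  exact: mono.
pose F := fun beta : R =>
     ereal_inf [set y : \bar R | exists (r : nat) (a : 'I_r -> 'cV[R[i]]_n)
        (d : 'I_r -> R), valid_theta A a d /\ y = (Lcost x a d beta)%:E].
have Fmono : {in `]0, +oo[%R &, nonincreasing_fun F}.
  move=> b1 b2 hb1 hb2 h; apply: le_ereal_inf_tmp => y [r [a [d [v ->]]]].
  apply: le_trans (mono _ _ _ v _ _ hb1 hb2 h).
  by apply: ereal_inf_lbound; exists r, a, d.
pose SF := ereal_sup (F @` `]0, +oo[).
have Fcv : F @ 0^'+ --> SF.
  by apply: nonincreasing_at_right_cvge; first by rewrite bnd_simp.
have ub : forall r (s : 'I_r -> R[i]) (a : 'I_r -> 'cV[R[i]]_n), (0 < r)%N ->
    (forall k, A (a k)) -> x = \sum_k s k *: a k -> forall e, 0 < e ->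
    exists d, valid_theta A a d /\ forall b, 0 < b ->
      Lcost x a d b <= \sum_k md (s k) + e.
  move=> r s a r0 Aa hx e e0.
  have er : 0 < e / r%:R by rewrite divr_gt0 // ltr0n.
  exists (fun k => md (s k) + e / r%:R); split.
    by split => // k; rewrite ltr_wpDl // md_ge0.
  move=> b b0; apply: le_trans (ub_rep r0 hx er b0) _.
  by rewrite mulrC divfK // pnatr_eq0 -lt0n.
have FleN : forall b, 0 < b -> (F b <= N)%E.
  move=> b b0; apply: le_ereal_inf_tmp => y [r [s [a [r0 Aa hx ->]]]].
  apply/lee_addgt0Pr => e e0; have [d [v hd]] := ub r s a r0 Aa hx e e0.
  apply: le_trans (ereal_inf_lbound _) _; first by exists r, a, d.
  by rewrite -EFinD lee_fin; exact: hd.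
have NleSF : (N <= SF)%E.
  apply: le_from_below => M hM; have [del del0 hdel] := lsc hM.
  pose b := del / (2 * (`|M| + 1)).
  have M1 : 0 < `|M| + 1 by rewrite ltr_wpDl.
  have b0 : 0 < b by rewrite divr_gt0 // mulr_gt0.
  apply: le_trans (_ : (M%:E <= F b)%E) (ereal_sup_ubound _); last first.
    by exists b => //; rewrite /= in_itv /= andbT.
  apply: le_ereal_inf_tmp => y [r [a [d [[r0 Aa dp] ->]]]].
  have := Lcost_lb x a dp b0; rewrite lee_fin.
  set s := sb x a d b; set Nw := Nv _.
  have s0 : 0 <= \sum_j md (s j) by rewrite sumr_ge0 // => j _; exact: md_ge0.
  have Nw0 : 0 <= Nw / (2 * b) by rewrite divr_ge0 ?Nv_ge0 // mulr_ge0 // ltW.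
  case: (ltP Nw del) => h.
    have := hdel r s a r0 Aa h; lra.
  have e1 : del / (2 * b) = `|M| + 1.
    rewrite /b; field; by rewrite gt_eqF // gt_eqF.
  have : del / (2 * b) <= Nw / (2 * b).
    by rewrite ler_wpM2r // invr_ge0 mulr_ge0 // ltW.
  have := ler_norm M.
  rewrite e1; lra.
have SFleN : (SF <= N)%E.
  apply: ge_ereal_sup => y [b hb <-]; apply: FleN.
  by move: hb; rewrite /= in_itv /= andbT.
have SFeq : SF = N by apply/eqP; rewrite eq_le SFleN NleSF.
have limE : forall r (a : 'I_r -> 'cV[R[i]]_n) d, valid_theta A a d ->
    lim ((fun b => (Lcost x a d b)%:E) @ 0^'+) =
    ereal_sup ((fun b => (Lcost x a d b)%:E) @` `]0, +oo[).
  by move=> r a d v; apply: (cvg_lim (@ereal_hausdorff R)); exact: lim_sup.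
split; first by move=> r a d v; eexists; exact: lim_sup.
split; last by rewrite -SFeq.
apply/eqP; rewrite eq_le; apply/andP; split.
- apply: le_ereal_inf_tmp => y [r [a [d [v ->]]]]; rewrite limE // -SFeq.
  apply: ge_ereal_sup => z [b hb <-].
  apply: le_trans (_ : (F b <= (Lcost x a d b)%:E)%E) (ereal_sup_ubound _).
    by apply: ereal_inf_lbound; exists r, a, d.
  by exists b.
- apply: le_ereal_inf_tmp => y [r [s [a [r0 Aa hx ->]]]].
  apply/lee_addgt0Pr => e e0; have [d [v hd]] := ub r s a r0 Aa hx e e0.
  apply: le_trans (ereal_inf_lbound _) _; first by exists r, a, d.
  rewrite limE //; apply: ge_ereal_sup => z [b hb <-].
  by rewrite -EFinD lee_fin; apply: hd; move: hb; rewrite /= in_itv /= andbT.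
Qed.
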